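(* Let $M$ be a graded finitely generated faithful graded multiplication $R$-module and $U$ a proper graded submodule of $M$, and assume $J_{gr}(M)=J_{gr}(R)M$. The following are equivalent: (i) $U$ is a graded weakly $J_{gr}$-semiprime submodule of $M$; (ii) $(U:_RM)$ is a graded weakly $J_{gr}$-semiprime ideal of $R$; (iii) $U=LM$ for some graded weakly $J_{gr}$-semiprime ideal $L$ of $R$.
   Context: Standing conventions: $\Gamma$ is a group, $R=\bigoplus_{g\in\Gamma}R_g$ is a commutative $\Gamma$-graded ring with identity, and $M=\bigoplus_{g\in\Gamma}M_g$ is a unitary $\Gamma$-graded $R$-module. $h(R)$, $h(M)$ are the homogeneous elements. A submodule $U$ is graded if $U=\bigoplus_g(U\cap M_g)$. $M$ is graded finitely generated if $M=Ra_1+\dots+Ra_n$ with $a_i\in h(M)$; graded multiplication if every graded submodule equals $KM$ for some graded ideal $K$ of $R$; faithful if $\mathrm{ann}_R(M)=0$. $(U:_RM)=\{r\in R: rM\subseteq U\}$. For a graded module $N$, a graded submodule $U\neq N$ is Gr-maximal if every graded submodule between $U$ and $N$ equals $U$ or $N$; $J_{gr}(N)$ is the intersection of all Gr-maximal submodules of $N$ ($=N$ if none); $J_{gr}(R)$ is this for $N=R$. A proper graded submodule $U$ of $M$ is graded weakly $J_{gr}$-semiprime if whenever $r_g\in h(R)$, $m_h\in h(M)$, $n\in\mathbb{Z}^+$ and $0\neq r_g^nm_h\in U$, then $r_gm_h\in U+J_{gr}(M)$; a graded ideal of $R$ is graded weakly $J_{gr}$-semiprime if it is so as a (proper) submodule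 of the graded $R$-module $R$. *)

(* Defs.v *)
From HB Require Import structures.
From mathcomp Require Import all_boot all_algebra.
Set Implicit Arguments. Unset Strict Implicit. Unset Printing Implicit Defensive.
Import GRing.Theory.
Local Open Scope ring_scope.

Section GradedDefs.

Variable G : eqType.
Variable op : G -> G -> G.

Definition is_group (e : G) (inv : G -> G) : Prop :=
  [/\ forall a b c, op a (op b c) = op (op a b) c,
      forall a, op e a = a /\ op a e = a
    & forall a, op (inv a) a = e /\ op a (inv a) = e].

Definition is_grading (V : zmodType) (VG : G -> V -> Prop) : Prop :=
  [/\
      forall g, VG g 0,
      forall g x y, VG g x -> VG g y -> VG g (x - y),
      forall x : V, exists (s : seq G) (a : G -> V),
          uniq s /\ (forall g, g \in s -> VG g (a g)) /\ x = \sum_(g <- s) a g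
    &
      forall (s : seq G) (a : G -> V), uniq s ->
          (forall g, g \in s -> VG g (a g)) ->
          \sum_(g <- s) a g = 0 -> forall g, g \in s -> a g = 0 ].

Variable R : comNzRingType.
Variable RG : G -> R -> Prop.

Definition graded_ring : Prop :=
  is_grading RG /\
  forall g h (x y : R), RG g x -> RG h y -> RG (op g h) (x * y).

Definition graded_module (M : lmodType R) (MG : G -> M -> Prop) : Prop :=
  is_grading MG /\
  forall g h (r : R) (m : M), RG g r -> MG h m -> MG (op g h) (r *: m).

Definition homogR (r : R) : Prop := exists g, RG g r.

Section OverModule.
Variable M : lmodType R.
Variable MG : G -> M -> Prop.

Definition homog (x : M) : Prop := exists g, MG g x.

Definition submodule (U : M -> Prop) : Prop :=
  [/\ U 0, forall x y, U x -> U y -> U (x + y)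
    & forall (r : R) x, U x -> U (r *: x)].

Definition graded_submodule (U : M -> Prop) : Prop :=
  submodule U /\
  forall x, U x -> exists (s : seq G) (a : G -> M),
     uniq s /\ (forall g, g \in s -> MG g (a g) /\ U (a g)) /\
     x = \sum_(g <- s) a g.

Definition gr_proper (U : M -> Prop) : Prop := exists x, ~ U x.

Definition gr_maximal (U : M -> Prop) : Prop :=
  [/\ graded_submodule U, gr_proper U &
      forall W, graded_submodule W -> (forall x, U x -> W x) ->
        (forall x, W x <-> U x) \/ (forall x, W x)].

(* J_gr(M): intersection of all Gr-maximal submodules (= M if none) *)
Definition Jgr (x : M) : Prop := forall U, gr_maximal U -> U x.

Definition gr_weakly_Jsemiprime (U : M -> Prop) : Prop :=
  [/\ graded_submodule U, gr_proper U &
      forall (r : R) (m : M) (n : nat), homogR r -> homog m -> (0 < n)%N ->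
        r ^+ n *: m != 0 -> U (r ^+ n *: m) ->
        exists u j, U u /\ Jgr j /\ r *: m = u + j].

Definition colon (U : M -> Prop) : R -> Prop := fun r => forall m : M, U (r *: m).

Definition idealM (K : R -> Prop) : M -> Prop :=
  fun x => exists (n : nat) (r : 'I_n -> R) (m : 'I_n -> M),
     (forall i, K (r i)) /\ x = \sum_(i < n) r i *: m i.

Definition gr_fin_gen : Prop :=
  exists (n : nat) (a : 'I_n -> M), (forall i, homog (a i)) /\
    forall x : M, exists c : 'I_n -> R, x = \sum_(i < n) c i *: a i.

Definition faithful : Prop := forall r : R, (forall m : M, r *: m = 0) -> r = 0.

End OverModule.

Definition graded_ideal (K : R -> Prop) : Prop :=
  @graded_submodule R^o RG K.

Definition gr_multiplication (M : lmodType R) (MG : G -> M -> Prop) : Prop :=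
  forall U, graded_submodule MG U ->
    exists K, graded_ideal K /\ forall x, U x <-> idealM K x.

(* J_gr(R) and graded weakly J_gr-semiprime ideals: R viewed as the graded
   R-module R (R^o, with r *: x = r * x) *)
Definition JgrR : R -> Prop := @Jgr R^o RG.
Definition gr_weakly_Jsemiprime_ideal (K : R -> Prop) : Prop :=
  @gr_weakly_Jsemiprime R^o RG K.

End GradedDefs.

(* Main.v *)
Require Import Defs.
From mathcomp Require Import all_boot all_algebra ring.
From mathcomp Require Import boolp classical_sets.
From Stdlib Require Import Classical.
Set Implicit Arguments. Unset Strict Implicit. Unset Printing Implicit Defensive.
Import GRing.Theory.
Local Open Scope ring_scope.

Definition ideal (R : comNzRingType) (K : R -> Prop) :=
  [/\ K 0, forall x y, K x -> K y -> K (x + y) & forall r x, K x -> K (r * x)].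

Lemma sub_ideal (R : comNzRingType) (K : R -> Prop) :
  @submodule R R^o K -> ideal K.
Proof. by case=> H0 HD HZ; split. Qed.

Lemma submod_sum (R : comNzRingType) (N : lmodType R) (U : N -> Prop)
  (I : Type) (s : seq I) (P : pred I) (F : I -> N) :
  submodule U -> (forall i, P i -> U (F i)) -> U (\sum_(i <- s | P i) F i).
Proof.
case=> H0 HD _ HF; elim/big_rec: _ => // i x Pi Ux; exact: HD (HF i Pi) Ux.
Qed.

Lemma submod_opp (R : comNzRingType) (N : lmodType R) (U : N -> Prop) x :
  submodule U -> U x -> U (- x).
Proof. by case=> _ _ HZ Ux; rewrite -scaleN1r; apply: HZ. Qed.

Lemma submod_sub (R : comNzRingType) (N : lmodType R) (U : N -> Prop) x y :
  submodule U -> U x -> U y -> U (x - y).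
Proof. move=> HU Ux Uy; case: (HU) => _ HD _; apply: HD => //; exact: submod_opp. Qed.

Lemma ideal_sum (R : comNzRingType) (K : R -> Prop) (I : Type) (s : seq I) (P : pred I) (F : I -> R) :
  ideal K -> (forall i, P i -> K (F i)) -> K (\sum_(i <- s | P i) F i).
Proof.
case=> H0 HD _ HF; elim/big_rec: _ => // i x Pi Ux; exact: HD (HF i Pi) Ux.
Qed.

Lemma ideal_opp (R : comNzRingType) (K : R -> Prop) x : ideal K -> K x -> K (- x).
Proof. by case=> _ _ HM Kx; rewrite -mulN1r; apply: HM. Qed.

Lemma ideal_sub (R : comNzRingType) (K : R -> Prop) x y : ideal K -> K x -> K y -> K (x - y).
Proof. move=> HK Kx Ky; case: (HK) => _ HD _; apply: HD => //; exact: ideal_opp. Qed.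

Lemma ideal_mulr (R : comNzRingType) (K : R -> Prop) x r : ideal K -> K x -> K (x * r).
Proof. by case=> _ _ HM Kx; rewrite mulrC; apply: HM. Qed.

Lemma idealM_submod (R : comNzRingType) (M : lmodType R) (K : R -> Prop) :
  submodule (idealM (M:=M) K).
Proof.
split.
- by exists 0%N, (fun _ => 0), (fun _ => 0); split; [by case | by rewrite big_ord0].
- move=> x y [n [r [m [Hr ->]]]] [n' [r' [m' [Hr' ->]]]].
  exists (n + n')%N, (fun i => match split i with inl j => r j | inr j => r' j end),
     (fun i => match split i with inl j => m j | inr j => m' j end); split.
    by move=> i; case: (split i).
  rewrite big_split_ord /=; congr (_ + _); apply: eq_bigr => i _.
    by have := unsplitK (inl i : 'I_n + 'I_n') => /= ->.
  by have := unsplitK (inr i : 'I_n + 'I_n') => /= ->.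
- move=> c x [n [r [m [Hr ->]]]]; exists n, r, (fun i => c *: m i); split => //.
  rewrite scaler_sumr; apply: eq_bigr => i _; rewrite !scalerA mulrC //.
Qed.

Lemma idealM1 (R : comNzRingType) (M : lmodType R) (K : R -> Prop) r (m : M) :
  K r -> idealM K (r *: m).
Proof. by move=> Kr; exists 1%N, (fun _ => r), (fun _ => m); split => //; rewrite big_ord1. Qed.

Lemma idealM_mono (R : comNzRingType) (M : lmodType R) (K K' : R -> Prop) (x : M) :
  (forall r, K r -> K' r) -> idealM K x -> idealM K' x.
Proof. by move=> H [n [r [m [Hr ->]]]]; exists n, r, m; split => // i; apply: H. Qed.

Lemma idealM_sub (R : comNzRingType) (M : lmodType R) (K : R -> Prop) (U : M -> Prop) (x : M) :
  submodule U -> (forall r m, K r -> U (r *: m)) -> idealM K x -> U x.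
Proof. by move=> HU H [n [r [m [Hr ->]]]]; apply: submod_sum => // i _; apply: H. Qed.

Lemma Jgr_submod (G : eqType) (R : comNzRingType) (M : lmodType R) (MG : G -> M -> Prop) :
  submodule (Jgr MG).
Proof.
split.
- by move=> U [[[H0 _ _] _] _ _].
- by move=> x y Hx Hy U HU; case: (HU) => [[[_ HD _] _] _ _]; apply: HD; [apply: Hx|apply: Hy].
- by move=> r x Hx U HU; case: (HU) => [[[_ _ HZ] _] _ _]; apply: HZ; apply: Hx.
Qed.

Lemma grading_add (G : eqType) (V : zmodType) (VG : G -> V -> Prop) g x y :
  is_grading VG -> VG g x -> VG g y -> VG g (x + y).
Proof.
case=> H0 HB _ _ Hx Hy.
have Hy' : VG g (0 - y) by apply: HB.
by have := HB _ _ _ Hx Hy'; rewrite sub0r opprK.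
Qed.

Lemma merge_decomp (G : eqType) (V : zmodType) (VG : G -> V -> Prop) (U : V -> Prop)
  (l : seq (G * V)) :
  is_grading VG -> U 0 -> (forall x y, U x -> U y -> U (x + y)) ->
  (forall p, p \in l -> VG p.1 p.2 /\ U p.2) ->
  exists (s : seq G) (a : G -> V),
     uniq s /\ (forall g, g \in s -> VG g (a g) /\ U (a g)) /\
     \sum_(p <- l) p.2 = \sum_(g <- s) a g.
Proof.
move=> Hgr U0 UD; elim: l => [|[g b] l IH] Hl.
  by exists [::], (fun _ => 0); split => //; rewrite !big_nil.
have [s [a [us [Ha Hsum]]]] : exists (s : seq G) (a : G -> V),
     uniq s /\ (forall g, g \in s -> VG g (a g) /\ U (a g)) /\
     \sum_(p <- l) p.2 = \sum_(g <- s) a g.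
  by apply: IH => p pl; apply: Hl; rewrite inE pl orbT.
have [Hgb Ub] : VG g b /\ U b by apply: (Hl (g, b)); rewrite inE eqxx.
rewrite big_cons /= Hsum.
case gs : (g \in s).
- exists s, (fun h => if h == g then a g + b else a h); split => //; split.
    move=> h hs; case: eqP => [->|_]; last exact: Ha.
    by have [H1 H2] := Ha g gs; split; [apply: grading_add|apply: UD].
  rewrite (bigD1_seq g gs us) (bigD1_seq g gs us) /= eqxx addrA [b + _]addrC.
  congr (_ + _); apply: eq_bigr => h /negbTE ->; done.
- exists (g :: s), (fun h => if h == g then b else a h); split.
    by rewrite /= gs.
  split.
    move=> h; rewrite inE; case: eqP => [->|_] //= hs; exact: Ha.
  rewrite big_cons eqxx; congr (_ + _); apply: eq_big_seq => h hs.
  by case: eqP => // hg; rewrite hg gs in hs.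
Qed.

Lemma ring_module (G : eqType) (op : G -> G -> G) (R : comNzRingType) (RG : G -> R -> Prop) :
  graded_ring op RG -> @graded_module G op R RG R^o RG.
Proof. by case=> H1 H2; split. Qed.

Lemma cyclic_graded (G : eqType) (op : G -> G -> G) (R : comNzRingType) (RG : G -> R -> Prop)
  (M : lmodType R) (MG : G -> M -> Prop) (m : M) :
  graded_ring op RG -> graded_module op RG MG -> homog MG m ->
  graded_submodule MG (fun y => exists c, y = c *: m).
Proof.
move=> [[_ _ HRd _] _] [HMg HM] [h Hm]; split.
  split.
  - by exists 0; rewrite scale0r.
  - by move=> x y [c ->] [d ->]; exists (c + d); rewrite scalerDl.
  - by move=> r x [c ->]; exists (r * c); rewrite scalerA.
move=> x [c ->].
have [s [a [us [Ha ->]]]] := HRd c.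
have Hl : forall p, p \in [seq (op g h, a g *: m) | g <- s] ->
   MG p.1 p.2 /\ (exists c, p.2 = c *: m).
  move=> p /mapP [g gs ->] /=; split; last by exists (a g).
  by apply: HM => //; apply: Ha.
have [s' [a' [us' [Ha' Hs]]]] := @merge_decomp G M MG (fun y => exists c, y = c *: m)
   _ HMg (ex_intro _ 0 (esym (scale0r m)))
   (fun x y '(ex_intro c Hc) '(ex_intro d Hd) => ex_intro _ (c + d) (etrans (f_equal2 _ Hc Hd) (esym (scalerDl _ _ _)))) Hl.
exists s', a'; split => //; split => //; rewrite -Hs big_map scaler_suml //.
Qed.

Lemma graded_ext (G : eqType) (R : comNzRingType) (M : lmodType R) (MG : G -> M -> Prop)
  (A B : M -> Prop) :
  (forall x, A x <-> B x) -> graded_submodule MG A -> graded_submodule MG B.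
Proof.
move=> E [[H0 HD HZ] Hd]; split; first split.
- by apply/E.
- by move=> x y /E Hx /E Hy; apply/E; apply: HD.
- by move=> r x /E Hx; apply/E; apply: HZ.
move=> x /E /Hd [s [a [us [Ha Hx]]]]; exists s, a; split => //; split => //.
by move=> g gs; have [? ?] := Ha g gs; split => //; apply/E.
Qed.

Lemma weak_ext (G : eqType) (R : comNzRingType) (RG : G -> R -> Prop)
  (M : lmodType R) (MG : G -> M -> Prop) (A B : M -> Prop) :
  (forall x, A x <-> B x) -> gr_weakly_Jsemiprime RG MG A -> gr_weakly_Jsemiprime RG MG B.
Proof.
move=> E [Hg [x Hx] Hw]; split.
- exact: graded_ext Hg.
- by exists x => /E.
- move=> r m n Hr Hm Hn Hnz /E HA; have [u [j [Hu [Hj ->]]]] := Hw r m n Hr Hm Hn Hnz HA.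
  by exists u, j; split => //; apply/E.
Qed.

(* every element is a sum of homogeneous ones *)
Lemma homog_ind (G : eqType) (op : G -> G -> G) (R : comNzRingType) (RG : G -> R -> Prop)
  (M : lmodType R) (MG : G -> M -> Prop) (V : M -> Prop) (r : R) :
  graded_module op RG MG -> submodule V ->
  (forall m, homog MG m -> V (r *: m)) -> forall m, V (r *: m).
Proof.
move=> [[_ _ HMd _] _] HV H m.
have [s [a [us [Ha ->]]]] := HMd m.
rewrite scaler_sumr big_seq; apply: submod_sum => // g gs.
by apply: H; exists g; apply: Ha.
Qed.

Lemma nilp_J (G : eqType) (op : G -> G -> G) (R : comNzRingType) (RG : G -> R -> Prop)
  (N : lmodType R) (NG : G -> N -> Prop) (t : R) (a : N) (n : nat) :
  graded_ring op RG -> graded_module op RG NG -> homogR RG t -> homog NG a ->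
  t ^+ n *: a = 0 -> Jgr NG (t *: a).
Proof.
move=> [[_ _ HRd _] _] [HNg HN] [dt Ht] [da Ha] Hn X [[HXs HXd] _ HXmax].
have HXs' := HXs; case: HXs' => X0 XD XZ.
pose W y := exists x c, X x /\ y = x + c *: (t *: a).
have Hta : NG (op dt da) (t *: a) by apply: HN.
have HWs : submodule W.
  split.
  - by exists 0, 0; rewrite scale0r addr0.
  - move=> y z [x [c [Hx ->]]] [x' [c' [Hx' ->]]]; exists (x + x'), (c + c'); split.
      exact: XD.
    by rewrite scalerDl addrACA.
  - move=> r y [x [c [Hx ->]]]; exists (r *: x), (r * c); split; first exact: XZ.
    by rewrite scalerDr scalerA.
have HW : graded_submodule NG W.
  split => //.
  move=> y [x [c [Hx ->]]].
  have [s1 [a1 [us1 [Ha1 ->]]]] := HXd x Hx.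
  have [s2 [c2 [us2 [Hc2 ->]]]] := HRd c.
  have Hl : forall p, p \in [seq (g, a1 g) | g <- s1] ++
        [seq (op g (op dt da), c2 g *: (t *: a)) | g <- s2] -> NG p.1 p.2 /\ W p.2.
    move=> p; rewrite mem_cat => /orP [/mapP [g gs ->]|/mapP [g gs ->]] /=.
      have [H1 H2] := Ha1 g gs; split => //; exists (a1 g), 0; split => //.
      by rewrite scale0r addr0.
    split; first by apply: HN => //; apply: Hc2.
    by exists 0, (c2 g); split => //; rewrite add0r.
  have [W0 WD _] := HWs.
  have [s [b [us [Hb Hs]]]] := merge_decomp HNg W0 WD Hl.
  exists s, b; split => //; split => //; rewrite -Hs big_cat !big_map /= scaler_suml //.
have : forall x, X x -> W x by move=> x Hx; exists x, 0; split => //; rewrite scale0r addr0.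
case/(HXmax W HW) => [E|Hall].
  by apply/E; exists 0, 1; split => //; rewrite add0r scale1r.
have [x [c [Hx Ha']]] := Hall a.
have H1 : X (a - (c * t) *: a).
  by have -> : a - (c * t) *: a = x by rewrite -scalerA {1}Ha' addrK.
have Hi : forall i, X (a - (c * t) ^+ i *: a).
  elim=> [|i IH]; first by rewrite expr0 scale1r subrr.
  have -> : a - (c * t) ^+ i.+1 *: a = (a - (c * t) ^+ i *: a) + (c * t) ^+ i *: (a - (c * t) *: a).
    by rewrite scalerBr scalerA -exprSr addrA subrK.
  by apply: XD => //; apply: XZ.
have := Hi n; rewrite exprMn -scalerA Hn scaler0 subr0 => Xa.
exact: XZ.
Qed.

Lemma nak (R : comNzRingType) (M : lmodType R) (Q : R -> Prop) (n : nat) :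
  ideal Q -> forall (a : 'I_n -> M) v (q : 'I_n -> 'I_n -> R),
  Q (1 - v) -> (forall i j, Q (q i j)) ->
  (forall i, v *: a i = \sum_j q i j *: a j) ->
  exists w, Q (1 - w) /\ forall i, w *: a i = 0.
Proof.
move=> HQ; have [Q0 QD QM] := HQ.
elim: n => [|n IH] a v q Hv Hq Ha.
  by exists 1; split; [rewrite subrr | case].
pose mx := (@ord_max n).
pose u := v - q mx mx.
have Hu : Q (1 - u).
  have -> : 1 - u = (1 - v) + q mx mx by rewrite /u; ring.
  by apply: QD.
have Hmax : u *: a mx = \sum_(j < n) q mx (widen_ord (leqnSn n) j) *: a (widen_ord (leqnSn n) j).
  by rewrite /u scalerBl Ha big_ord_recr /= addrK.
pose a' (j : 'I_n) := a (widen_ord (leqnSn n) j).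
pose q' (i j : 'I_n) := u * q (widen_ord (leqnSn n) i) (widen_ord (leqnSn n) j)
   + q (widen_ord (leqnSn n) i) mx * q mx (widen_ord (leqnSn n) j).
have Hv' : Q (1 - u * v).
  have -> : 1 - u * v = (1 - u) + u * (1 - v) by ring.
  by apply: QD => //; apply: QM.
have Hq' : forall i j, Q (q' i j).
  by move=> i j; apply: QD; apply: QM.
have Ha' : forall i, (u * v) *: a' i = \sum_j q' i j *: a' j.
  move=> i; rewrite -scalerA /a' Ha big_ord_recr /= scalerDr.
  rewrite [u *: (_ *: a ord_max)]scalerA [u * _]mulrC -scalerA -/mx Hmax !scaler_sumr.
  rewrite -big_split /=; apply: eq_bigr => j _.
  by rewrite /q' !scalerA scalerDl.
have [w' [Hw' Hw'a]] := IH a' (u * v) q' Hv' Hq' Ha'.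
exists (w' * u); split.
  have -> : 1 - w' * u = (1 - w') + w' * (1 - u) by ring.
  by apply: QD => //; apply: QM.
move=> i; case: (unliftP mx i) => [j ->|->].
  have -> : lift mx j = widen_ord (leqnSn n) j by apply: val_inj; exact: lift_max.
  by rewrite mulrC -scalerA Hw'a scaler0.
rewrite -scalerA Hmax scaler_sumr big1 // => j _.
by rewrite scalerA mulrC -scalerA Hw'a scaler0.
Qed.

Lemma max_ideal (R : comNzRingType) (I : R -> Prop) :
  ideal I -> ~ I 1 -> exists Q : R -> Prop, ideal Q /\ (forall x, I x -> Q x) /\ ~ Q 1 /\
    forall k, ~ Q k -> exists q c, Q q /\ 1 = q + c * k.
Proof.
move=> HI nI1.
pose P (A : set R) := (exists x, A x) -> [/\ ideal A, (forall x, I x -> A x) & ~ A 1].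
have [] := @Zorn_bigcup R P.
  move=> F FP Ftot [x [X FX Xx]].
  have key : forall X Y y z, F X -> F Y -> X y -> Y z ->
      exists Z, [/\ F Z, Z y & Z z].
    move=> X1 Y1 y z FX1 FY1 Xy Yz; case: (Ftot _ _ FX1 FY1) => H.
      by exists Y1; split => //; apply: H.
    by exists X1; split => //; apply: H.
  have [[H0 HD HM] HIX nX1] := FP X FX (ex_intro _ x Xx).
  split.
  - split.
    + by exists X.
    + move=> y z [Y FY Yy] [Z FZ Zz]; have [W [FW Wy Wz]] := key _ _ _ _ FY FZ Yy Zz.
      exists W => //; have [[_ HD' _] _ _] := FP W FW (ex_intro _ y Wy); exact: HD'.
    + move=> r y [Y FY Yy]; exists Y => //.
      by have [[_ _ HM'] _ _] := FP Y FY (ex_intro _ y Yy); apply: HM'.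
  - by move=> y Iy; exists X => //; apply: HIX.
  - move=> [Y FY Y1]; by have [_ _ nY1] := FP Y FY (ex_intro _ 1 Y1).
move=> Q [PQ Qmax].
have [HQ HIQ nQ1] : [/\ ideal Q, (forall x, I x -> Q x) & ~ Q 1].
  apply: PQ; apply: NNPP => nE.
  have HIP : P I by move=> _; split.
  apply: (Qmax I) => //; split.
    by move=> y Qy; exfalso; apply: nE; exists y.
  move=> sub; apply: nE; exists 0; apply: sub; by case: HI.
exists Q; split => //; split => //; split => // k nQk.
have [Q0 QD QM] := HQ.
pose B y := exists q c, Q q /\ y = q + c * k.
apply: NNPP => nB1; apply: (Qmax B).
  split.
    by move=> y Qy; exists y, 0; rewrite mul0r addr0.
  by move=> sub; apply: nQk; apply: sub; exists 0, 1; rewrite mul1r add0r.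
move=> _; split.
- split.
  + by exists 0, 0; rewrite mul0r addr0.
  + move=> y z [q [c [Qq ->]]] [q' [c' [Qq' ->]]]; exists (q + q'), (c + c'); split.
      exact: QD.
    ring.
  + move=> r y [q [c [Qq ->]]]; exists (r * q), (r * c); split; first exact: QM.
    ring.
- by move=> y Iy; exists y, 0; split; [apply: HIQ | rewrite mul0r addr0].
- exact: nB1.
Qed.

Lemma cancel_gen (G : eqType) (op : G -> G -> G) (R : comNzRingType) (RG : G -> R -> Prop)
  (M : lmodType R) (MG : G -> M -> Prop) (K : R -> Prop) (x : R) :
  graded_ring op RG -> graded_module op RG MG -> gr_fin_gen MG -> faithful M ->
  gr_multiplication RG MG -> ideal K -> (forall m : M, idealM K (x *: m)) -> K x.
Proof.
move=> HR HM Hfg Hfaith Hmult HK Hx.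
apply: NNPP => nKx.
have [K0 KD KM] := HK.
pose I c := K (c * x).
have HI : ideal I.
  split; rewrite /I.
  - by rewrite mul0r.
  - by move=> a b Ia Ib; rewrite mulrDl; apply: KD.
  - by move=> r a Ia; rewrite -mulrA; apply: KM.
have nI1 : ~ I 1 by rewrite /I mul1r.
have [Q [HQ [HIQ [nQ1 Qmax]]]] := max_ideal HI nI1.
have [Q0 QD QM] := HQ.
case: (classic (forall m, homog MG m -> idealM Q m)) => [HA|HB].
  have [n [a [Ha Hgen]]] := Hfg.
  have Hrow : forall y, idealM Q y -> exists row : 'I_n -> R,
      (forall j, Q (row j)) /\ y = \sum_j row j *: a j.
    move=> y; apply: (@idealM_sub R M Q (fun y => exists row : 'I_n -> R,
      (forall j, Q (row j)) /\ y = \sum_j row j *: a j) y).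
      split.
      - by exists (fun _ => 0); split => //; rewrite big1 // => j _; rewrite scale0r.
      - move=> y1 y2 [r1 [H1 ->]] [r2 [H2 ->]]; exists (fun j => r1 j + r2 j); split.
          by move=> j; apply: QD.
        by rewrite -big_split; apply: eq_bigr => j _; rewrite scalerDl.
      - move=> c y1 [r1 [H1 ->]]; exists (fun j => c * r1 j); split.
          by move=> j; apply: QM.
        by rewrite scaler_sumr; apply: eq_bigr => j _; rewrite scalerA.
    move=> r m Qr; have [cc ->] := Hgen m; exists (fun j => r * cc j); split.
      by move=> j; apply: ideal_mulr.
    by rewrite scaler_sumr; apply: eq_bigr => j _; rewrite scalerA.
  pose q i := proj1_sig (cid (Hrow (a i) (HA _ (Ha i)))).
  have Hq : forall i j, Q (q i j) by move=> i j; rewrite /q; case: cid => r [Hr _] /=.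
  have Haq : forall i, 1 *: a i = \sum_j q i j *: a j.
    by move=> i; rewrite scale1r /q; case: cid => r [_ Hr] /=.
  have [w [Hw Hwa]] := @nak R M Q n HQ a 1 q (ltac:(by rewrite subrr)) Hq Haq.
  have w0 : w = 0.
    apply: Hfaith => m; have [cc ->] := Hgen m.
    rewrite scaler_sumr big1 // => j _; by rewrite scalerA mulrC -scalerA Hwa scaler0.
  by apply: nQ1; move: Hw; rewrite w0 subr0.
have [m Hm] := not_all_ex_not _ _ HB.
have [Hhm nQm] := imply_to_and _ _ Hm.
have [K' [HK' E]] := Hmult _ (cyclic_graded HR HM Hhm).
have [K'0 K'D K'M] := sub_ideal (proj1 HK').
have [k [K'k nQk]] : exists k, K' k /\ ~ Q k.
  apply: NNPP => nex; apply: nQm.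
  have : idealM K' m by apply/E; exists 1; rewrite scale1r.
  apply: idealM_mono => r K'r; apply: NNPP => nQr; apply: nex; by exists r.
have [q [c [Qq Hqc]]] := Qmax k nQk.
have Hcyc : forall m', exists d, (1 - q) *: m' = d *: m.
  move=> m'; have : idealM K' (k *: m') by apply: idealM1.
  move/E => [d0 Hd0]; exists (c * d0).
  by rewrite -scalerA -Hd0 scalerA; congr (_ *: _); rewrite Hqc; ring.
have [N [r [ms [Hr Hsum]]]] := Hx m.
pose d i := proj1_sig (cid (Hcyc (ms i))).
have Hd : forall i, (1 - q) *: ms i = d i *: m by move=> i; rewrite /d; case: cid.
pose k0 := \sum_i r i * d i.
have Kk0 : K k0 by apply: ideal_sum => // i _; apply: ideal_mulr.
have eq1 : (1 - q) *: (x *: m) = k0 *: m.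
  rewrite Hsum scaler_sumr /k0 scaler_suml; apply: eq_bigr => i _.
  by rewrite -(scalerA (r i) (d i)) -Hd !scalerA mulrC.
pose z := (1 - q) * x - k0.
have zm : z *: m = 0 by rewrite /z scalerBl -scalerA eq1 subrr.
have z0 : z * (1 - q) = 0.
  apply: Hfaith => m'; rewrite -scalerA; have [d' ->] := Hcyc m'.
  by rewrite scalerA mulrC -scalerA zm scaler0.
have Iq : I ((1 - q) * (1 - q)).
  rewrite /I; have -> : (1 - q) * (1 - q) * x = z * (1 - q) + (1 - q) * k0 by rewrite /z; ring.
  by rewrite z0 add0r; apply: KM.
have Qq2 := HIQ _ Iq.
apply: nQ1; have -> : (1 : R) = (1 - q) * (1 - q) + (1 + 1 - q) * q by ring.
by apply: QD => //; apply: QM.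
Qed.

Theorem mainTheorem17
  (G : eqType) (op : G -> G -> G) (e : G) (inv : G -> G)
  (R : comNzRingType) (RG : G -> R -> Prop)
  (M : lmodType R) (MG : G -> M -> Prop)
  (U : M -> Prop) :
  is_group op e inv ->
  graded_ring op RG ->
  graded_module op RG MG ->
  gr_fin_gen MG ->
  faithful M ->
  gr_multiplication RG MG ->
  graded_submodule MG U -> gr_proper U ->
  (forall x : M, Jgr MG x <-> idealM (JgrR RG) x) ->
  (gr_weakly_Jsemiprime RG MG U <->
     gr_weakly_Jsemiprime_ideal RG (colon U)) /\
  (gr_weakly_Jsemiprime_ideal RG (colon U) <->
     exists L : R -> Prop, gr_weakly_Jsemiprime_ideal RG L /\
       forall x : M, U x <-> idealM L x).
Proof.
move=> Hgrp HR HM Hfg Hfaith Hmult HU Hprop HJ.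
have [K0 [HK0 HUK]] := Hmult U HU.
have K0i := sub_ideal (proj1 HK0).
have HUs := proj1 HU.
have [U0 UD UZ] := HUs.
have Hcancel : forall K x, ideal K -> (forall m : M, idealM K (x *: m)) -> K x.
  by move=> K x; apply: (cancel_gen HR HM Hfg Hfaith Hmult).
have Hcol : forall r, colon U r <-> K0 r.
  move=> r; split => [Hc | Kr].
  - by apply: Hcancel => // m; apply/HUK; exact: Hc.
  - by move=> m; apply/HUK; exact: idealM1.
have HJRi : ideal (JgrR RG) := sub_ideal (@Jgr_submod G R R^o RG).
have [JR0 JRD JRM] := HJRi.
have [JM0 JMD JMZ] := Jgr_submod MG.
pose V y := exists u j, U u /\ Jgr MG j /\ y = u + j.
have VS : submodule V.
  split.
  - by exists 0, 0; rewrite addr0.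
  - move=> y z [u [j [Hu [Hj ->]]]] [u' [j' [Hu' [Hj' ->]]]]; exists (u + u'), (j + j').
    by split; [apply: UD | split; [apply: JMD | rewrite addrACA]].
  - move=> c y [u [j [Hu [Hj ->]]]]; exists (c *: u), (c *: j).
    by split; [apply: UZ | split; [apply: JMZ | rewrite scalerDr]].
have [V0 VD VZ] := VS.
split; split.
-
  move=> [_ _ Hw]; split.
  + by apply: (graded_ext (M := R^o) _ HK0) => r; split => /Hcol.
  + have [x0 nUx] := Hprop; exists 1; move=> H1; apply: nUx; move: (H1 x0); by rewrite scale1r.
  + move=> r s n Hr Hs Hn Hnz Hc.
    have Hall : forall m, V ((r * s) *: m).
      apply: (homog_ind HM VS) => m Hm; rewrite -scalerA.
      have Hsm : homog MG (s *: m).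
        by case: Hs => g Hg; case: Hm => h Hh; exists (op g h); apply: (proj2 HM).
      case: (eqVneq (r ^+ n *: (s *: m)) 0) => Hz.
        exists 0, (r *: (s *: m)); split => //; split; last by rewrite add0r.
        exact: (nilp_J HR HM Hr Hsm Hz).
      apply: (Hw r (s *: m) n) => //; rewrite scalerA; exact: Hc.
    pose Kc y := exists u j, colon U u /\ JgrR RG j /\ y = u + j.
    have Kci : ideal Kc.
      split.
      - by exists 0, 0; split; [apply/Hcol; case: K0i | split; rewrite ?addr0].
      - move=> y z [u [j [Hu [Hj ->]]]] [u' [j' [Hu' [Hj' ->]]]]; exists (u + u'), (j + j').
        split; first by apply/Hcol; case: K0i => _ KD _; apply: KD; apply/Hcol.
        by split; [apply: JRD | rewrite addrACA].
      - move=> c y [u [j [Hu [Hj ->]]]]; exists (c * u), (c * j).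
        split; first by apply/Hcol; case: K0i => _ _ KM; apply: KM; apply/Hcol.
        by split; [apply: JRM | rewrite mulrDr].
    have : Kc (r * s).
      apply: Hcancel => // m; have [u [j [Uu [Jj ->]]]] := Hall m.
      case: (idealM_submod M Kc) => _ HD _; apply: HD.
        move/HUK: Uu; apply: idealM_mono => c Kc0; exists c, 0.
        by split; [apply/Hcol | split; rewrite ?addr0].
      move/HJ: Jj; apply: idealM_mono => c Jc; exists 0, c.
      by split; [apply/Hcol; case: K0i | split; rewrite ?add0r].
    by case=> u [j [Hu [Hj E]]]; exists u, j.
-
  move=> [HgK HpK Hw]; split => // r m n Hr Hm Hn Hnz HUm.
  have [K' [HK' E]] := Hmult _ (cyclic_graded HR HM Hm).
  have Hk : forall k, @homog G R R^o RG k -> K' k -> forall m', V ((r * k) *: m').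
    move=> k Hk K'k m'.
    have Hc : colon U (r ^+ n * k).
      move=> m''; have : idealM K' (k *: m'') by apply: idealM1.
      move/E => [d Hd]; rewrite -scalerA Hd scalerA mulrC -scalerA; exact: UZ.
    case: (eqVneq (r ^+ n * k) 0) => Hz.
      have Jrk : JgrR RG (r * k) by apply: (nilp_J HR (ring_module HR) Hr Hk Hz).
      exists 0, ((r * k) *: m'); split => //; split; last by rewrite add0r.
      by apply/HJ; apply: idealM1.
    have [u [j [Hu [Hj Ee]]]] := Hw r k n Hr Hk Hn Hz Hc.
    have Ee' : r * k = u + j by exact: Ee.
    rewrite Ee' scalerDl; exists (u *: m'), (j *: m'); split; first exact: Hu.
    by split => //; apply/HJ; apply: idealM1.
  have Hk' : forall k, K' k -> forall m', V ((r * k) *: m').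
    move=> k K'k m'; have [s [a [us [Ha ->]]]] := proj2 HK' k K'k.
    rewrite mulr_sumr scaler_suml big_seq; apply: (@submod_sum R M V) => // g gs.
    by have [Hg Kg] := Ha g gs; apply: Hk => //; exists g.
  have : idealM K' m by apply/E; exists 1; rewrite scale1r.
  move=> [N [k [ms [Hkk ->]]]]; rewrite scaler_sumr; apply: (@submod_sum R M V) => // i _.
  by rewrite scalerA; apply: Hk'.
-
  move=> H; exists (colon U); split => // x; split.
  + by move/HUK; apply: idealM_mono => r /Hcol.
  + by apply: idealM_sub => // r m' Hc; exact: Hc m'.
-
  move=> [L [HL HUL]]; have [HLg _ _] := HL.
  have Li := sub_ideal (proj1 HLg).
  apply: (weak_ext (M := R^o) _ HL) => r; split.
  + by move=> Lr m; apply/HUL; apply: idealM1.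
  + by move=> Hc; apply: Hcancel => // m; apply/HUL; apply: Hc.
Qed.
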